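(* Consider a Pandora's box problem with sequential inspection. Let $(\mathcal{C},\mathcal{P},y)$ be any state in which stopping is not an optimal action, and suppose that a closed box $i\in\mathcal{C}$ satisfies $\sigma_i^F>\sigma_i^P$ and that $\sigma_i^F$ is the largest opening threshold in that state, i.e. $$\sigma_i^F=\max\Big\{\max_{j\in\mathcal{C}}\max\{\sigma_j^F,\sigma_j^P\},\ \max_{j\in\mathcal{P}}\sigma_j^{F\mid t_j}\Big\}.$$ Then there exists an optimal policy that F-opens box $i$ immediately.
   Context: Pandora's box problem with sequential inspection: there are $N$ independent boxes. Box $i$ has a type $T_i$ taking values in a finite set $\Gamma_i$ and a nonnegative prize $V_i$, with a known joint distribution of $(V_i,T_i)$; different boxes are independent. A closed box $i$ can be F-opened (fully opened) at cost $c_i^F$, which reveals $V_i$, or P-opened (partially opened) at cost $c_i^P$, which reveals only $T_i$; a partially opened box can later be F-opened at an additional cost $c_i^F$. At any time the decision maker may stop and collect the largest prize among the F-opened boxes (or the initial value $y$). The objective is to maximize the expected collected prize minus the total inspection costs. A state is $(\mathcal{C},\mathcal{P},y)$ where $\mathcal{C}$ is the set of closed boxes, $\mathcal{P}$ is the set of partially opened boxes together with their revealed types $t_j$, and $y$ is the largest prize found so far. Thresholds: $\sigma_i^F$ solves $\mathbb{E}[(V_i-\sigma)^+]=c_i^F$; $\sigma_i^{F\mid t}$ solves $\mathbb{E}[(V_i-\sigma)^+\mid T_i=t]=c_i^F$; $\sigma_i^P$ solves $\mathbb{E}\big[\max\{0,-c_i^F+\mathbb{E}[(V_i-\sigma)^+\mid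 T_i]\}\big]=c_i^P$. The opening thresholds of a state are $\sigma_j^F,\sigma_j^P$ for $j\in\mathcal{C}$ and $\sigma_j^{F\mid t_j}$ for $j\in\mathcal{P}$. *)

(* Defs.v *)
From HB Require Import structures.
From mathcomp Require Import all_boot all_order all_algebra.
From mathcomp Require Import all_classical all_reals all_analysis.
Unset Printing Implicit Defensive.
Import Order.TTheory GRing.Theory Num.Theory.
Local Open Scope ring_scope.
Local Open Scope classical_set_scope.

(* Status of a box in a state: closed (in C), partially opened with revealed
   type t (in P, with t_j = t), or already fully opened (then its prize has
   already been absorbed into y). *)
Inductive bstatus (G : Type) := Closed | Part of G | Done.
Arguments Closed {G}.
Arguments Part {G} _.
Arguments Done {G}.

Section Pandora.
Variables (R : realType) (N : nat) (Gam : 'I_N -> finType).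

Definition state := forall j : 'I_N, bstatus (Gam j).

Definition upd (s : state) (j : 'I_N) (x : bstatus (Gam j)) : state :=
  fun k => match j =P k with
           | ReflectT e => eq_rect j (fun k => bstatus (Gam k)) x k e
           | ReflectF _ => s k
           end.

(* weight: 2 per closed box, 1 per partially opened box; every inspection
   strictly decreases it. *)
Definition weight (s : state) : nat :=
  \sum_(j < N) match s j with Closed => 2 | Part _ => 1 | Done => 0 end.

(* Model data:
   pT j t   = P(T_j = t),
   mu j t   = conditional law of V_j given T_j = t (a probability on R),
   cF j, cP j = F- and P-opening costs. *)
Variables (pT : forall j, Gam j -> R)
          (mu : forall j, Gam j -> probability R R)
          (cF cP : 'I_N -> R).

Definition condE (j : 'I_N) (t : Gam j) (g : R -> R) : R :=
  Rintegral (mu j t) setT g.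

Fixpoint Vfuel (n : nat) (s : state) (y : R) {struct n} : R :=
  match n with
  | 0 => y
  | n'.+1 =>
    \big[Num.max/y]_(j < N)
      match s j with
      | Closed =>
          Num.max
            (- cF j + \sum_(t : Gam j) pT j t *
                        condE j t (fun v => Vfuel n' (upd s j Done) (Num.max y v)))
            (- cP j + \sum_(t : Gam j) pT j t * Vfuel n' (upd s j (Part t)) y)
      | Part t =>
          - cF j + condE j t (fun v => Vfuel n' (upd s j Done) (Num.max y v))
      | Done => y
      end
  end.

Definition Value (s : state) (y : R) : R := Vfuel (weight s) s y.

Definition QFopen (s : state) (y : R) (i : 'I_N) : R :=
  - cF i + \sum_(t : Gam i) pT i t *
             condE i t (fun v => Value (upd s i Done) (Num.max y v)).

Definition is_sigmaF (j : 'I_N) (sg : R) : Prop :=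
  \sum_(t : Gam j) pT j t * condE j t (fun v => Num.max (v - sg) 0) = cF j.

Definition is_sigmaFt (j : 'I_N) (t : Gam j) (sg : R) : Prop :=
  condE j t (fun v => Num.max (v - sg) 0) = cF j.

Definition is_sigmaP (j : 'I_N) (sg : R) : Prop :=
  \sum_(t : Gam j) pT j t *
     Num.max 0 (- cF j + condE j t (fun v => Num.max (v - sg) 0)) = cP j.

End Pandora.

Arguments upd {N Gam} s j x.
Arguments weight {N Gam} s.
Arguments condE {R N Gam} mu j t g.
Arguments Vfuel {R N Gam} pT mu cF cP n s y.
Arguments Value {R N Gam} pT mu cF cP s y.
Arguments QFopen {R N Gam} pT mu cF cP s y i.
Arguments is_sigmaF {R N Gam} pT mu cF j sg.
Arguments is_sigmaFt {R N Gam} mu cF j t sg.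
Arguments is_sigmaP {R N Gam} pT mu cF cP j sg.

(* Main.v *)
Require Import Defs.
From HB Require Import structures.
From mathcomp Require Import all_boot all_order all_algebra.
From mathcomp Require Import all_classical all_reals all_analysis.
From mathcomp Require Import measurable_realfun.
From mathcomp Require Import ring lra zify.
Import Order.TTheory GRing.Theory Num.Theory.
Local Open Scope ring_scope.
Local Open Scope classical_set_scope.

Ltac mm := repeat match goal with
 | |- context [@Order.max _ _ ?x ?y] =>
     let h := fresh "hm" in have [h|h] := leP x y; move: h
 | |- context [@Order.min _ _ ?x ?y] =>
     let h := fresh "hm" in have [h|h] := leP x y; move: h
 end; intros.

Section Aux.
Context {R : realType}.

Definition nlip (f : R -> R) := forall a b, b <= a -> f b <= f a <= f b + (a - b).

Definition good (h : R -> R) := {homo h : a b / a <= b} /\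
  exists a b : R, 0 <= b /\ forall v, `|h v| <= a + b * `|v|.

Lemma nlip_good f : nlip f -> good f.
Proof.
move=> hf; split.
  by move=> a b ab; case/andP: (hf _ _ ab).
exists `|f 0|, 1; split => // v; rewrite mul1r.
have H1 : f 0 <= `|f 0| by exact: ler_norm.
have H2 : - `|f 0| <= f 0 by rewrite lerNl -normrN ler_norm.
rewrite ler_norml.
have [v0|v0] := leP 0 v.
  case/andP: (hf v 0 v0) => h1 h2.
  rewrite (ger0_norm v0); lra.
have /ltW v0' := v0.
case/andP: (hf 0 v v0') => h1 h2.
rewrite (ltr0_norm v0); lra.
Qed.




Lemma nlip_comp f g : nlip f -> nlip g -> nlip (fun v => f (g v)).
Proof.
move=> hf hg a b ab; case/andP: (hg _ _ ab) => g1 g2.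
case/andP: (hf _ _ g1) => f1 f2; apply/andP; split => //; lra.
Qed.

Lemma nlip_id : nlip id.
Proof. move=> a b ab; apply/andP; split => //; lra. Qed.

Lemma nlip_cst k : nlip (fun _ => k).
Proof. move=> a b ab; apply/andP; split => //; lra. Qed.

Lemma nlip_maxl y : nlip (fun v => Num.max y v).
Proof. move=> a b ab; apply/andP; split; mm; lra. Qed.

Lemma nlip_maxr y : nlip (fun v => Num.max v y).
Proof. move=> a b ab; apply/andP; split; mm; lra. Qed.

Lemma nlip_minr c : nlip (fun v => Num.min v c).
Proof. move=> a b ab; apply/andP; split; mm; lra. Qed.

Lemma nlip_pos c : nlip (fun v => Num.max (v - c) 0).
Proof. move=> a b ab; apply/andP; split; mm; lra. Qed.

Lemma nlip_addc f k : nlip f -> nlip (fun v => k + f v).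
Proof.
move=> hf a b ab; case/andP: (hf _ _ ab) => f1 f2; apply/andP; split; lra.
Qed.

Lemma nlip_max f g : nlip f -> nlip g -> nlip (fun v => Num.max (f v) (g v)).
Proof.
move=> hf hg a b ab; case/andP: (hf _ _ ab) => f1 f2.
case/andP: (hg _ _ ab) => g1 g2; apply/andP; split; mm; lra.
Qed.

Lemma nlip_convex (I : finType) (w : I -> R) (F : I -> R -> R) :
  (forall t, 0 <= w t) -> \sum_t w t = 1 -> (forall t, nlip (F t)) ->
  nlip (fun z => \sum_t w t * F t z).
Proof.
move=> w0 w1 hF a b ab; apply/andP; split.
  by apply: ler_sum => t _; apply: ler_wpM2l => //; case/andP: (hF t _ _ ab).
have E : \sum_t w t * (F t b + (a - b)) = \sum_t w t * F t b + (a - b).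
  rewrite (eq_bigr (fun t => w t * F t b + w t * (a - b))); last by move=> t _; rewrite mulrDr.
  by rewrite big_split /= -mulr_suml w1 mul1r.
rewrite -E; apply: ler_sum => t _; apply: ler_wpM2l => //; by case/andP: (hF t _ _ ab).
Qed.

Lemma good_cst k : good (fun _ => k).
Proof. exact/nlip_good/nlip_cst. Qed.

Lemma good_add f g : good f -> good g -> good (fun v => f v + g v).
Proof.
move=> [hf [a [b [b0 hb]]]] [hg [a' [b' [b0' hb']]]]; split.
  by move=> x y xy; apply: lerD; [apply: hf|apply: hg].
exists (a + a'), (b + b'); split; first exact: addr_ge0.
move=> v; apply: (le_trans (ler_normD _ _)).
have := hb v; have := hb' v; lra.
Qed.

Lemma good_scale k f : 0 <= k -> good f -> good (fun v => k * f v).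
Proof.
move=> k0 [hf [a [b [b0 hb]]]]; split.
  by move=> x y xy; apply: ler_wpM2l => //; apply: hf.
exists (k * a), (k * b); split; first exact: mulr_ge0.
move=> v; rewrite normrM (ger0_norm k0) -mulrA -mulrDr.
exact: ler_wpM2l.
Qed.

Lemma good_sum_seq (I : Type) (r : seq I) (w : I -> R) (F : I -> R -> R) :
  (forall t, 0 <= w t) -> (forall t, good (F t)) ->
  good (fun z => \sum_(t <- r) w t * F t z).
Proof.
move=> w0 hF; elim: r => [|t r ih].
  have -> : (fun z => \sum_(t <- [::]) w t * F t z) = (fun _ => 0).
    by apply/funext => z; rewrite big_nil.
  exact: good_cst.
have -> : (fun z => \sum_(t0 <- t :: r) w t0 * F t0 z) =
          (fun z => w t * F t z + \sum_(t0 <- r) w t0 * F t0 z).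
  by apply/funext => z; rewrite big_cons.
by apply: good_add; [exact: good_scale|exact: ih].
Qed.

Lemma good_sum (I : finType) (w : I -> R) (F : I -> R -> R) :
  (forall t, 0 <= w t) -> (forall t, good (F t)) ->
  good (fun z => \sum_t w t * F t z).
Proof.
move=> w0 hF.
have : forall r : seq I, good (fun z => \sum_(t <- r) w t * F t z).
  elim=> [|t r ih].
    have -> : (fun z => \sum_(t <- [::]) w t * F t z) = (fun _ => 0).
      by apply/funext => z; rewrite big_nil.
    exact: good_cst.
  have -> : (fun z => \sum_(t0 <- t :: r) w t0 * F t0 z) =
            (fun z => w t * F t z + \sum_(t0 <- r) w t0 * F t0 z).
    by apply/funext => z; rewrite big_cons.
  by apply: good_add; [exact: good_scale|exact: ih].
by move/(_ (index_enum I)).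
Qed.

End Aux.
Arguments nlip_comp {R f g}.


Section Core.
Variable R : realType.
Variables mu nu : probability R R.

Lemma core_swap (A B : R -> R) :
  {homo A : a b / a <= b} -> {homo B : a b / a <= b} ->
  (forall v, 0 <= A v) -> (forall u, 0 <= B u) ->
  (forall v, (\int[mu]_u ((Num.max (A v) (B u))%:E) \is a fin_num)%E) ->
  (forall u, (\int[nu]_v ((Num.max (A v) (B u))%:E) \is a fin_num)%E) ->
  Rintegral nu setT (fun v => Rintegral mu setT (fun u => Num.max (A v) (B u))) =
  Rintegral mu setT (fun u => Rintegral nu setT (fun v => Num.max (A v) (B u))).
Proof.
move=> hA hB A0 B0 f1 f2.
rewrite /Rintegral.
have -> : (\int[nu]_v (fine (\int[mu]_u (Num.max (A v) (B u))%:E))%:E =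
           \int[nu]_v \int[mu]_u (Num.max (A v) (B u))%:E)%E.
  by apply: eq_integral => v _; rewrite fineK.
have -> : (\int[mu]_u (fine (\int[nu]_v (Num.max (A v) (B u))%:E))%:E =
           \int[mu]_u \int[nu]_v (Num.max (A v) (B u))%:E)%E.
  by apply: eq_integral => u _; rewrite fineK.
congr fine.
pose f := fun p : R * R => (Num.max (A p.1) (B p.2))%:E.
have mf : measurable_fun setT f.
  apply/measurable_EFinP.
  apply: measurable_maxr.
  - apply: measurableT_comp; last exact: measurable_fst.
    exact: nondecreasing_measurable.
  - apply: measurableT_comp; last exact: measurable_snd.
    exact: nondecreasing_measurable.
have f0 : forall p, (0 <= f p)%E.
  by move=> p; rewrite /f lee_fin le_max A0.
exact: (@fubini_tonelli _ _ _ _ _ nu mu f mf f0).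
Qed.
End Core.

Section Main.
Variable R : realType.
Variable N : nat.
Variable Gam : 'I_N -> finType.
Variable pT : forall j, Gam j -> R.
Variable mu : forall j, Gam j -> probability R R.
Variables cF cP : 'I_N -> R.
Hypothesis hpT0 : forall j t, 0 <= pT j t.
Hypothesis hpT1 : forall j, \sum_(t : Gam j) pT j t = 1.
Hypothesis hmuI : forall j t, (mu j t).-integrable setT (fun v => v%:E).

Lemma E_int j t h : good h -> (mu j t).-integrable setT (EFin \o h).
Proof.
move=> [hm [a [b [b0 hb]]]].
apply: (@le_integrable _ _ _ (mu j t) setT measurableT _ (fun v => (a + b * `|v|)%:E)).
- by apply/measurable_EFinP; exact: nondecreasing_measurable.
- move=> v _ /=; rewrite /abse lee_fin; apply: (le_trans (hb v)); exact: ler_norm.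
- have -> : (fun v => (a + b * `|v|)%:E) = (fun v => a%:E) \+ (fun v => b%:E * (abse (v%:E)))%E.
    by apply/funext => v /=; rewrite EFinD EFinM.
  apply: integrableD => //.
  + exact: finite_measure_integrable_cst.
  + apply: integrableZl => //; exact: (integrable_abse (hmuI j t)).
Qed.

Lemma E_cst j t k : condE mu j t (fun _ => k) = k.
Proof.
rewrite /condE Rintegral_cst //.
transitivity (k * fine (1%E : \bar R)); last by rewrite /= mulr1.
by congr (_ * fine _); exact: probability_setT.
Qed.

Lemma E_le j t h g : good h -> good g -> (forall v, h v <= g v) ->
  condE mu j t h <= condE mu j t g.
Proof.
move=> gh gg hg; apply: le_Rintegral => //; by apply: E_int.
Qed.

Lemma E_add j t h g : good h -> good g ->
  condE mu j t (fun v => h v + g v) = condE mu j t h + condE mu j t g.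
Proof. by move=> gh gg; rewrite /condE RintegralD //; apply: E_int. Qed.

Lemma E_addc j t h k : good h ->
  condE mu j t (fun v => h v + k) = condE mu j t h + k.
Proof. by move=> gh; rewrite E_add ?E_cst //; exact: good_cst. Qed.

Lemma E_caddc j t h k : good h ->
  condE mu j t (fun v => k + h v) = k + condE mu j t h.
Proof. by move=> gh; rewrite E_add ?E_cst //; exact: good_cst. Qed.

Lemma E_scale j t k h : good h ->
  condE mu j t (fun v => k * h v) = k * condE mu j t h.
Proof. by move=> gh; rewrite /condE RintegralZl //; apply: E_int. Qed.

Lemma E_sum j t (I : finType) (w : I -> R) (F : I -> R -> R) :
  (forall t, 0 <= w t) -> (forall t, good (F t)) ->
  condE mu j t (fun v => \sum_t' w t' * F t' v) = \sum_t' w t' * condE mu j t (F t').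
Proof.
move=> w0 hF.
have : forall r : seq I, condE mu j t (fun v => \sum_(t' <- r) w t' * F t' v) =
                        \sum_(t' <- r) w t' * condE mu j t (F t').
  elim=> [|t0 r ih].
    transitivity (condE mu j t (fun _ => 0)).
      by congr condE; apply/funext => v; rewrite big_nil.
    by rewrite E_cst big_nil.
  rewrite big_cons -ih -E_scale // -E_add //; last 2 first.
  - exact: good_scale.
  - exact: good_sum_seq.
  by congr condE; apply/funext => v; rewrite big_cons.
by move/(_ (index_enum I)).
Qed.

Lemma E_nlip j t (F : R -> R -> R) :
  (forall u, nlip (fun v => F v u)) -> (forall v, good (F v)) ->
  nlip (fun v => condE mu j t (F v)).
Proof.
move=> hF gF a b ab; apply/andP; split.
  by apply: E_le => // u; case/andP: (hF u _ _ ab).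
rewrite -E_addc //; apply: E_le => //.
  by apply: good_add => //; exact: good_cst.
by move=> u; case/andP: (hF u _ _ ab).
Qed.


Lemma E_swap0 j t i t' (A B : R -> R) : nlip A -> nlip B ->
  (forall v, 0 <= A v) -> (forall u, 0 <= B u) ->
  condE mu j t (fun v => condE mu i t' (fun u => Num.max (A v) (B u))) =
  condE mu i t' (fun u => condE mu j t (fun v => Num.max (A v) (B u))).
Proof.
move=> hA hB A0 B0; rewrite /condE.
apply: core_swap => //.
- by move=> a b ab; case/andP: (hA _ _ ab).
- by move=> a b ab; case/andP: (hB _ _ ab).
- move=> v; apply: integrable_fin_num => //.
  by apply: (E_int i t'); apply/nlip_good/nlip_max => //; exact: nlip_cst.
- move=> u; apply: integrable_fin_num => //.
  by apply: (E_int j t); apply/nlip_good/nlip_max => //; exact: nlip_cst.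
Qed.

Lemma f_max (f : R -> R) p q : {homo f : a b / a <= b} ->
  f (Num.max p q) = Num.max (f p) (f q).
Proof.
move=> hf; have [h|h] := leP p q.
  by have := hf _ _ h => h'; rewrite (max_r h').
have /ltW h1 := h; have := hf _ _ h1 => h'; by rewrite (max_l h').
Qed.

Lemma max_absorb (a b y : R) : y <= a -> Num.max a (Num.max y b) = Num.max a b.
Proof. by move=> ya; mm; lra. Qed.

Lemma max_shift (x y m : R) : Num.max x y = m + Num.max (x - m) (y - m).
Proof. by mm; lra. Qed.

Lemma E_swap j t i t' (f : R -> R) y c : nlip f ->
  condE mu j t (fun v => condE mu i t' (fun u => f (Num.max (Num.max y v) (Num.min u c)))) =
  condE mu i t' (fun u => condE mu j t (fun v => f (Num.max (Num.max y (Num.min u c)) v))).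
Proof.
move=> hf.
have hfm : {homo f : a b / a <= b} by move=> a b ab; case/andP: (hf _ _ ab).
pose m := f y.
pose A v := f (Num.max y v) - m.
pose B u := f (Num.max y (Num.min u c)) - m.
have hA : nlip A.
  rewrite /A; move=> a b ab.
  case/andP: (nlip_comp hf (nlip_maxl y) a b ab) => h1 h2; apply/andP; split; lra.
have hB : nlip B.
  rewrite /B; move=> a b ab.
  case/andP: (nlip_comp hf (nlip_comp (nlip_maxl y) (nlip_minr c)) a b ab) => h1 h2.
  apply/andP; split; lra.
have A0 : forall v, 0 <= A v.
  by move=> v; rewrite /A /m subr_ge0; apply: hfm; rewrite le_max lexx.
have B0 : forall u, 0 <= B u.
  by move=> u; rewrite /B /m subr_ge0; apply: hfm; rewrite le_max lexx.
have lm : forall a b : R, a <= Num.max a b by move=> a b; rewrite le_max lexx.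
have e1 : forall v u, f (Num.max (Num.max y v) (Num.min u c)) = m + Num.max (A v) (B u).
  move=> v u.
  rewrite -(@max_absorb (Num.max y v) (Num.min u c) y (lm y v)) (f_max f) // /A /B.
  exact: max_shift.
have e2 : forall v u, f (Num.max (Num.max y (Num.min u c)) v) = m + Num.max (A v) (B u).
  move=> v u.
  rewrite -(@max_absorb (Num.max y (Num.min u c)) v y (lm y (Num.min u c))).
  rewrite (maxC (Num.max y (Num.min u c)) (Num.max y v)) (f_max f) // /A /B.
  exact: max_shift.
have gAB : forall v, good (fun u => Num.max (A v) (B u)).
  by move=> v; apply/nlip_good/nlip_max => //; exact: nlip_cst.
have gAB' : forall u, good (fun v => Num.max (A v) (B u)).
  by move=> u; apply/nlip_good/nlip_max => //; exact: nlip_cst.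
transitivity (condE mu j t (fun v => m + condE mu i t' (fun u => Num.max (A v) (B u)))).
  congr condE; apply/funext => v; rewrite -E_caddc //.
  by congr condE; apply/funext => u; rewrite e1.
transitivity (condE mu i t' (fun u => m + condE mu j t (fun v => Num.max (A v) (B u)))); last first.
  congr condE; apply/funext => u; rewrite -E_caddc //.
  by congr condE; apply/funext => v; rewrite e2.
rewrite !E_caddc ?E_swap0 //.
- apply: nlip_good; apply: E_nlip => // v.
  by apply/nlip_max => //; exact: nlip_cst.
- apply: nlip_good; apply: E_nlip => // u.
  by apply/nlip_max => //; exact: nlip_cst.
Qed.

Definition wt {G : Type} (b : bstatus G) : nat :=
  match b with Closed => 2 | Part _ => 1 | Done => 0 end.

Lemma upd_same (s : state N Gam) j x : upd s j x j = x.
Proof.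
rewrite /upd; case: (j =P j) => [e|]; last by [].
by rewrite (eq_irrelevance e erefl).
Qed.

Lemma upd_other (s : state N Gam) j x k : j != k -> upd s j x k = s k.
Proof. by move=> ne; rewrite /upd; case: (j =P k) => // e; exfalso; move/eqP: ne; apply. Qed.

Lemma upd_upd (s : state N Gam) j x z : upd (upd s j x) j z = upd s j z.
Proof.
apply: functional_extensionality_dep => k.
have [<-|ne] := eqVneq j k; first by rewrite !upd_same.
by rewrite !upd_other.
Qed.

Lemma upd_comm (s : state N Gam) j k x z : j != k ->
  upd (upd s j x) k z = upd (upd s k z) j x.
Proof.
move=> jk; apply: functional_extensionality_dep => l.
have [<-|nj] := eqVneq j l.
  by rewrite upd_other 1?eq_sym // !upd_same.
have [<-|nk] := eqVneq k l.
  by rewrite upd_same upd_other // upd_same.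
by rewrite !upd_other.
Qed.

Lemma weightE (s : state N Gam) : weight s = (\sum_(j < N) wt (s j))%N.
Proof. by []. Qed.

Lemma weight_upd (s : state N Gam) j x :
  (weight (upd s j x) + wt (s j) = weight s + wt x)%N.
Proof.
rewrite !weightE (bigD1 j) //= [X in (_ = X + _)%N](bigD1 j) //= upd_same.
have -> : (\sum_(i < N | i != j) wt (upd s j x i) = \sum_(i < N | i != j) wt (s i))%N.
  by apply: eq_bigr => k kj; rewrite upd_other // eq_sym.
set S := (\sum_(i < N | i != j) wt (s i))%N; set a := wt x; set b := wt (s j); lia.
Qed.

Lemma weight_done (s : state N Gam) j : s j <> Done ->
  (weight (upd s j Done) < weight s)%N.
Proof.
move=> h; have := weight_upd s j Done; move: h.
case: (s j) => [|t|] //= _; lia.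
Qed.

Lemma weight_part (s : state N Gam) j t : s j = Closed ->
  (weight (upd s j (Part t)) < weight s)%N.
Proof.
move=> h; have := weight_upd s j (Part t); rewrite h /= => e.
lia.
Qed.

Lemma wt_le (s : state N Gam) j : (wt (s j) <= weight s)%N.
Proof. by rewrite weightE (bigD1 j) //= leq_addr. Qed.

Lemma weight0 (s : state N Gam) j : weight s = 0%N -> s j = Done.
Proof.
move=> h; have := wt_le s j; rewrite h; by case: (s j).
Qed.

Lemma bigmax_cst (y : R) : \big[Num.max/y]_(j < N) y = y.
Proof. by elim/big_rec: _ => // j x _ ->; rewrite maxxx. Qed.

Local Notation V := (Vfuel pT mu cF cP).
Local Notation Val := (Value pT mu cF cP).

Lemma VfuelE n s y : V n.+1 s y =
  \big[Num.max/y]_(j < N)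
      match s j with
      | Closed =>
          Num.max
            (- cF j + \sum_(t : Gam j) pT j t *
                        condE mu j t (fun v => V n (upd s j Done) (Num.max y v)))
            (- cP j + \sum_(t : Gam j) pT j t * V n (upd s j (Part t)) y)
      | Part t =>
          - cF j + condE mu j t (fun v => V n (upd s j Done) (Num.max y v))
      | Done => y
      end.
Proof. by []. Qed.

Lemma VfuelS n s y : (weight s <= n)%N -> V n.+1 s y = V n s y.
Proof.
elim: n s y => [|n IH] s y hw.
  have h0 : weight s = 0%N by apply/eqP; rewrite -leqn0.
  rewrite VfuelE /= -[RHS](bigmax_cst y); apply: eq_bigr => j _.
  by rewrite (weight0 s j h0).
rewrite VfuelE [RHS]VfuelE; apply: eq_bigr => j _.
have := weight_done s j; have := weight_part s j.
case: (s j) => [|t|] // hp hd.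
- have hd' := hd ltac:(by []).
  congr (Num.max (_ + _) (_ + _)).
  + apply: eq_bigr => t _; congr (_ * _); congr condE; apply/funext => v.
    by apply: IH; rewrite -ltnS (leq_trans hd').
  + apply: eq_bigr => t _; congr (_ * _).
    by apply: IH; rewrite -ltnS (leq_trans (hp t erefl)).
- have hd' := hd ltac:(by []).
  congr (_ + _); congr condE; apply/funext => v.
  by apply: IH; rewrite -ltnS (leq_trans hd').
Qed.

Lemma Value_eq n s y : (weight s <= n)%N -> V n s y = Val s y.
Proof.
elim: n => [|n IH] hw.
  have h0 : weight s = 0%N by apply/eqP; rewrite -leqn0.
  by rewrite /Value h0.
move: hw; rewrite leq_eqVlt => /orP[/eqP <-|hw] //.
by rewrite VfuelS ?IH // -ltnS.
Qed.

Definition br (s : state N Gam) (y : R) (j : 'I_N) : R :=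
  match s j with
  | Closed =>
      Num.max
        (- cF j + \sum_(t : Gam j) pT j t *
                    condE mu j t (fun v => Val (upd s j Done) (Num.max y v)))
        (- cP j + \sum_(t : Gam j) pT j t * Val (upd s j (Part t)) y)
  | Part t =>
      - cF j + condE mu j t (fun v => Val (upd s j Done) (Num.max y v))
  | Done => y
  end.

Lemma ValueE s y : Val s y = \big[Num.max/y]_(j < N) br s y j.
Proof.
case h: (weight s) => [|n].
  rewrite /Value h /= -[LHS](bigmax_cst y); apply: eq_bigr => j _.
  by rewrite /br (weight0 s j h).
rewrite /Value h VfuelE; apply: eq_bigr => j _; rewrite /br.
have := weight_done s j; have := weight_part s j.
case: (s j) => [|t|] // hp hd.
- have hd' := hd ltac:(by []).
  congr (Num.max (_ + _) (_ + _)).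
  + apply: eq_bigr => t _; congr (_ * _); congr condE; apply/funext => v.
    by apply: Value_eq; rewrite -ltnS -h.
  + apply: eq_bigr => t _; congr (_ * _).
    by apply: Value_eq; rewrite -ltnS -h (hp t erefl).
- have hd' := hd ltac:(by []).
  congr (_ + _); congr condE; apply/funext => v.
  by apply: Value_eq; rewrite -ltnS -h.
Qed.

Lemma Value_ge s y : y <= Val s y.
Proof.
rewrite ValueE; elim/big_rec: _ => // j x _ h.
by rewrite le_max h orbT.
Qed.

Lemma nlip_bigmax (F : 'I_N -> R -> R) : (forall j, nlip (F j)) ->
  nlip (fun z => \big[Num.max/z]_(j < N) F j z).
Proof.
move=> hF a b ab.
pose K (x x' : R) := x <= x' <= x + (a - b).
have : K (\big[Num.max/b]_(j < N) F j b) (\big[Num.max/a]_(j < N) F j a).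
  apply: (big_ind2 K).
  - by rewrite /K; apply/andP; split; lra.
  - move=> x1 x2 y1 y2; rewrite /K => /andP[h1 h2] /andP[h3 h4].
    apply/andP; split; mm; lra.
  - by move=> j _; exact: hF.
by [].
Qed.

Lemma nlip_E_shift j t f : nlip f ->
  nlip (fun z => condE mu j t (fun v => f (Num.max z v))).
Proof.
move=> hf; apply: E_nlip.
  by move=> u; apply: nlip_comp hf (nlip_maxr u).
by move=> z; apply/nlip_good/(nlip_comp hf (nlip_maxl z)).
Qed.

Lemma Value_nlip s : nlip (Val s).
Proof.
have : forall n s, (weight s <= n)%N -> nlip (Val s).
  elim=> [|n IH] {}s hw.
    have h0 : weight s = 0%N by apply/eqP; rewrite -leqn0.
    have -> : Val s = id.
      by apply/funext => y; rewrite /Value h0.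
    exact: nlip_id.
  have -> : Val s = (fun z => \big[Num.max/z]_(j < N) br s z j).
    by apply/funext => y; rewrite ValueE.
  apply: nlip_bigmax => j; rewrite /br.
  have := weight_done s j; have := weight_part s j.
  case: (s j) => [|t|] // hp hd.
  - have hd' := hd ltac:(by []).
    have hf : nlip (Val (upd s j Done)) by apply: IH; rewrite -ltnS (leq_trans hd').
    apply: nlip_max.
      apply: nlip_addc; apply: nlip_convex => // t; exact: nlip_E_shift.
    apply: nlip_addc; apply: nlip_convex => // t.
    by apply: IH; rewrite -ltnS (leq_trans (hp t erefl)).
  - have hd' := hd ltac:(by []).
    have hf : nlip (Val (upd s j Done)) by apply: IH; rewrite -ltnS (leq_trans hd').
    by apply: nlip_addc; exact: nlip_E_shift.
  - move=> a b ab; apply/andP; split; lra.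
by move=> h; apply: (h (weight s)).
Qed.

Lemma br_le s z j : br s z j <= Val s z.
Proof. by rewrite ValueE; exact: le_bigmax. Qed.

Definition Bnd (i : 'I_N) (w c : Gam i -> R) (f : R -> R) (y : R) : R :=
  \sum_(t : Gam i) w t * condE mu i t (fun u => f (Num.max y (Num.min u (c t)))).

Lemma G_nlip i t c f : nlip f ->
  nlip (fun z => condE mu i t (fun u => f (Num.max z (Num.min u c)))).
Proof.
move=> hf; apply: E_nlip.
  by move=> u; exact: nlip_comp hf (nlip_maxr (Num.min u c)).
by move=> z; apply/nlip_good/(nlip_comp hf (nlip_comp (nlip_maxl z) (nlip_minr c))).
Qed.

Lemma G_good (c : R) (f : R -> R) : nlip f -> forall y : R,
  good (fun u => f (Num.max y (Num.min u c))).
Proof.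
by move=> hf y; apply/nlip_good/(nlip_comp hf (nlip_comp (nlip_maxl y) (nlip_minr c))).
Qed.

Section BndLemmas.
Variables (i : 'I_N) (w c : Gam i -> R).
Hypothesis w0 : forall t, 0 <= w t.
Hypothesis w1 : \sum_t w t = 1.

Lemma Bnd_nlip f : nlip f -> nlip (Bnd i w c f).
Proof. by move=> hf; apply: nlip_convex => // t; exact: G_nlip. Qed.

Lemma Bnd_mono f g y : nlip f -> nlip g -> (forall z, f z <= g z) ->
  Bnd i w c f y <= Bnd i w c g y.
Proof.
move=> hf hg fg; apply: ler_sum => t _; apply: ler_wpM2l => //.
apply: E_le; [exact: G_good|exact: G_good|by move=> u; apply: fg].
Qed.

Lemma Bnd_ge f y : nlip f -> (forall z, z <= f z) -> y <= Bnd i w c f y.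
Proof.
move=> hf fz.
have e : \sum_t w t * condE mu i t (fun _ => y) = y.
  by under eq_bigr do rewrite E_cst; rewrite -mulr_suml w1 mul1r.
rewrite -[X in X <= _]e; apply: ler_sum => t _; apply: ler_wpM2l => //.
apply: E_le; [exact: good_cst|exact: G_good|].
by move=> u; apply: (le_trans _ (fz _)); rewrite le_max lexx.
Qed.

Lemma Bnd_lin (J : finType) (a : J -> R) (g : J -> R -> R) k y :
  (forall t, 0 <= a t) -> (forall t, nlip (g t)) ->
  Bnd i w c (fun z => k + \sum_t' a t' * g t' z) y =
  k + \sum_t' a t' * Bnd i w c (g t') y.
Proof.
move=> a0 hg; rewrite /Bnd.
have -> : \sum_t w t * condE mu i t
              (fun u => k + \sum_t' a t' * g t' (Num.max y (Num.min u (c t)))) =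
          \sum_t (w t * k + \sum_t' a t' * (w t * condE mu i t
                     (fun u => g t' (Num.max y (Num.min u (c t)))))).
  apply: eq_bigr => t _; rewrite E_caddc; last first.
    by apply: good_sum => // t'; exact: G_good.
  rewrite E_sum //; last by move=> t'; exact: G_good.
  rewrite mulrDr mulr_sumr; congr (_ + _); apply: eq_bigr => t' _.
  by rewrite mulrCA.
rewrite big_split /= -mulr_suml w1 mul1r; congr (_ + _).
rewrite exchange_big /=; apply: eq_bigr => t' _; by rewrite mulr_sumr.
Qed.

Lemma Bnd_addc f k y : nlip f ->
  Bnd i w c (fun z => k + f z) y = k + Bnd i w c f y.
Proof.
move=> hf.
rewrite /Bnd.
have -> : \sum_t w t * condE mu i t (fun u => k + f (Num.max y (Num.min u (c t)))) =
          \sum_t (w t * k + w t * condE mu i t (fun u => f (Num.max y (Num.min u (c t))))).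
  by apply: eq_bigr => t _; rewrite E_caddc ?mulrDr //; exact: G_good.
by rewrite big_split /= -mulr_suml w1 mul1r.
Qed.

Lemma Bnd_swap j t f y : nlip f ->
  condE mu j t (fun v => Bnd i w c f (Num.max y v)) =
  Bnd i w c (fun z => condE mu j t (fun v => f (Num.max z v))) y.
Proof.
move=> hf; rewrite /Bnd E_sum //; last first.
  by move=> t'; apply/nlip_good/(nlip_comp (G_nlip i t' (c t') f hf) (nlip_maxl y)).
apply: eq_bigr => t' _; congr (_ * _); exact: E_swap.
Qed.

End BndLemmas.

Lemma Bnd_ind i t (c : Gam i -> R) g y :
  Bnd i (fun t' => (t' == t)%:R) c g y =
  condE mu i t (fun u => g (Num.max y (Num.min u (c t)))).
Proof.
rewrite /Bnd (bigD1 t) //= eqxx mul1r big1 ?addr0 //.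
by move=> t' /negbTE ->; rewrite mul0r.
Qed.

Lemma ind_ge0 i (t : Gam i) t' : 0 <= (t' == t)%:R :> R.
Proof. by case: (t' == t). Qed.

Lemma ind_sum1 i (t : Gam i) : \sum_t' (t' == t)%:R = 1 :> R.
Proof.
rewrite (bigD1 t) //= eqxx big1 ?addr0 //.
by move=> t' /negbTE ->.
Qed.

Lemma pw1 (f : R -> R) (y v c : R) : nlip f ->
  f (Num.max y v) <= f (Num.max y (Num.min v c)) + Num.max (v - c) 0.
Proof.
move=> hf.
have ba : Num.max y (Num.min v c) <= Num.max y v by mm; lra.
have dab : Num.max y v - Num.max y (Num.min v c) <= Num.max (v - c) 0 by mm; lra.
case/andP: (hf _ _ ba) => _ h; lra.
Qed.

Lemma pw2 (f : R -> R) (y u st sp M : R) : nlip f -> sp <= M ->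
  f (Num.max y (Num.min u st)) <=
  f (Num.max y (Num.min u M)) + Num.max (Num.min u st - sp) 0.
Proof.
move=> hf spM.
have p0 : 0 <= Num.max (Num.min u st - sp) 0 by rewrite le_max lexx orbT.
have [ab|ba] := leP (Num.max y (Num.min u st)) (Num.max y (Num.min u M)).
  case/andP: (hf _ _ ab) => h _; lra.
have /ltW ba' := ba.
case/andP: (hf _ _ ba') => _ h.
have : Num.max y (Num.min u st) - Num.max y (Num.min u M) <=
       Num.max (Num.min u st - sp) 0.
  move: ba; mm; lra.
lra.
Qed.

Lemma good_pos (c : R) : good (fun v : R => Num.max (v - c) 0).
Proof. exact/nlip_good/nlip_pos. Qed.

Lemma good_pos2 (st sp : R) : good (fun v : R => Num.max (Num.min v st - sp) 0).
Proof. exact/nlip_good/(nlip_comp (nlip_pos sp) (nlip_minr st)). Qed.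

Lemma S1 i t f y c : nlip f ->
  condE mu i t (fun v => f (Num.max y v)) <=
  condE mu i t (fun v => f (Num.max y (Num.min v c))) +
  condE mu i t (fun v => Num.max (v - c) 0).
Proof.
move=> hf; rewrite -E_add; [|exact: G_good|exact: good_pos].
apply: E_le.
- exact/nlip_good/(nlip_comp hf (nlip_maxl y)).
- by apply: good_add; [exact: G_good|exact: good_pos].
- by move=> v; exact: pw1.
Qed.

Variables (sF sP : 'I_N -> R) (sFt : forall j, Gam j -> R).
Hypothesis hsF : forall j, is_sigmaF pT mu cF j (sF j).
Hypothesis hsP : forall j, is_sigmaP pT mu cF cP j (sP j).
Hypothesis hsFt : forall j t, is_sigmaFt mu cF j t (sFt j t).

Definition Mc j := Num.max (sF j) (sP j).

Definition wB i (b : bstatus (Gam i)) : Gam i -> R :=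
  match b with Part t0 => fun t => (t == t0)%:R | _ => pT i end.
Definition cB i (b : bstatus (Gam i)) : Gam i -> R :=
  match b with Part t0 => fun _ => sFt i t0 | _ => fun _ => Mc i end.

Lemma wB_ge0 i b t : 0 <= wB i b t.
Proof. by case: b => [|t0|] /=; rewrite ?ind_ge0. Qed.

Lemma wB_sum1 i b : \sum_t wB i b t = 1.
Proof. by case: b => [|t0|] /=; rewrite ?ind_sum1. Qed.

Lemma QFi_le i f y : nlip f ->
  - cF i + \sum_t pT i t * condE mu i t (fun v => f (Num.max y v)) <=
  Bnd i (pT i) (fun _ => Mc i) f y.
Proof.
move=> hf.
have h1 : \sum_t pT i t * condE mu i t (fun v => f (Num.max y v)) <=
          Bnd i (pT i) (fun _ => Mc i) f y +
          \sum_t pT i t * condE mu i t (fun v => Num.max (v - sF i) 0).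
  rewrite /Bnd -big_split /=; apply: ler_sum => t _.
  rewrite -mulrDr; apply: ler_wpM2l => //.
  apply: (le_trans (S1 i t f y (Mc i) hf)); rewrite lerD2l.
  apply: E_le; [exact: good_pos|exact: good_pos|].
  by move=> v; rewrite /Mc; mm; lra.
move: h1; rewrite (hsF i); lra.
Qed.

Lemma QFp_le i t0 f y : nlip f ->
  - cF i + condE mu i t0 (fun v => f (Num.max y v)) <=
  Bnd i (wB i (Part t0)) (cB i (Part t0)) f y.
Proof.
move=> hf; rewrite /= Bnd_ind.
have := S1 i t0 f y (sFt i t0) hf; rewrite (hsFt i t0); lra.
Qed.

Lemma Ppos i t :
  condE mu i t (fun u => Num.max (Num.min u (sFt i t) - sP i) 0) <=
  Num.max 0 (- cF i + condE mu i t (fun u => Num.max (u - sP i) 0)).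
Proof.
have [h|h] := leP (sP i) (sFt i t).
  have e : condE mu i t (fun u => Num.max (Num.min u (sFt i t) - sP i) 0) + cF i =
           condE mu i t (fun u => Num.max (u - sP i) 0).
    rewrite -(hsFt i t) -E_add; [|exact: good_pos2|exact: good_pos].
    by congr condE; apply/funext => u; move: h; mm; lra.
  rewrite le_max; apply/orP; right; lra.
have -> : condE mu i t (fun u => Num.max (Num.min u (sFt i t) - sP i) 0) = 0.
  transitivity (condE mu i t (fun _ => 0)); last exact: E_cst.
  by congr condE; apply/funext => u; move: h; mm; lra.
by rewrite le_max lexx.
Qed.

Lemma QPi_le i f y : nlip f ->
  - cP i + \sum_t pT i t * condE mu i t (fun u => f (Num.max y (Num.min u (sFt i t)))) <=
  Bnd i (pT i) (fun _ => Mc i) f y.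
Proof.
move=> hf.
have h1 : \sum_t pT i t * condE mu i t (fun u => f (Num.max y (Num.min u (sFt i t)))) <=
          Bnd i (pT i) (fun _ => Mc i) f y +
          \sum_t pT i t * Num.max 0 (- cF i + condE mu i t (fun u => Num.max (u - sP i) 0)).
  rewrite /Bnd -big_split /=; apply: ler_sum => t _.
  rewrite -mulrDr; apply: ler_wpM2l => //.
  apply: le_trans (lerD (lexx _) (Ppos i t)).
  rewrite -E_add; [|exact: G_good|exact: good_pos2].
  apply: E_le; [exact: G_good| |].
    by apply: good_add; [exact: G_good|exact: good_pos2].
  by move=> u; apply: pw2 => //; rewrite /Mc le_max lexx orbT.
move: h1; rewrite (hsP i); lra.
Qed.

Lemma claimB_n n : forall s i y, (weight s <= n)%N -> s i <> Done ->
  Val s y <= Bnd i (wB i (s i)) (cB i (s i)) (Val (upd s i Done)) y.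
Proof.
elim: n => [|n IH] s i y hw hi.
  have h0 : weight s = 0%N by apply/eqP; rewrite -leqn0.
  by case: hi; exact: weight0.
have hf : nlip (Val (upd s i Done)) := Value_nlip _.
have hfz : forall z, z <= Val (upd s i Done) z := Value_ge _.
have w0 := wB_ge0 i (s i).
have w1 := wB_sum1 i (s i).
rewrite ValueE; apply: bigmax_le; first exact: Bnd_ge.
move=> j _; have [-> | ji] := eqVneq j i.
  rewrite /br; move: hi w0 w1; case E: (s i) => [|t0|] hi w0 w1 //=.
    rewrite ge_max; apply/andP; split; first exact: QFi_le.
    apply: (le_trans _ (QPi_le i (Val (upd s i Done)) y hf)).
    rewrite lerD2l; apply: ler_sum => t _; apply: ler_wpM2l => //.
    have hw' : (weight (upd s i (Part t)) <= n)%N.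
      by rewrite -ltnS (leq_trans (weight_part s i t E)).
    have := IH (upd s i (Part t)) i y hw'; rewrite upd_same upd_upd Bnd_ind /=.
    by apply.
  exact: QFp_le.
have ij : i != j by rewrite eq_sym.
have hIH : forall x z, (weight (upd s j x) <= n)%N ->
    Val (upd s j x) z <= Bnd i (wB i (s i)) (cB i (s i)) (Val (upd (upd s i Done) j x)) z.
  move=> x z hx; have := IH (upd s j x) i z hx; rewrite upd_other //.
  by rewrite (upd_comm s j i x Done ji); apply.
have hsj : upd s i Done j = s j by rewrite upd_other.
rewrite /br; move: (hsj); case E: (s j) => [|t0|] hsj' /=.
- rewrite ge_max; apply/andP; split.
  + have hg : nlip (Val (upd (upd s i Done) j Done)) := Value_nlip _.
    have hw' : (weight (upd s j Done) <= n)%N.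
      by rewrite -ltnS (leq_trans (weight_done s j _)) // E.
    apply: (@le_trans _ _ (- cF j + \sum_t pT j t * condE mu j t
        (fun v => Bnd i (wB i (s i)) (cB i (s i)) (Val (upd (upd s i Done) j Done)) (Num.max y v)))).
      rewrite lerD2l; apply: ler_sum => t _; apply: ler_wpM2l => //.
      apply: E_le.
      * exact/nlip_good/(nlip_comp (Value_nlip _) (nlip_maxl y)).
      * exact/nlip_good/(nlip_comp (Bnd_nlip _ _ (cB i (s i)) w0 w1 _ hg) (nlip_maxl y)).
      * by move=> v; exact: hIH.
    under eq_bigr do rewrite Bnd_swap //.
    rewrite -Bnd_lin //; last by move=> t; exact: nlip_E_shift.
    apply: Bnd_mono => //.
      apply: nlip_addc; apply: nlip_convex => // t; exact: nlip_E_shift.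
    move=> z; apply: (le_trans _ (br_le (upd s i Done) z j)).
    by rewrite /br hsj' /= le_max lexx.
  + apply: (@le_trans _ _ (- cP j + \sum_t pT j t *
        Bnd i (wB i (s i)) (cB i (s i)) (Val (upd (upd s i Done) j (Part t))) y)).
      rewrite lerD2l; apply: ler_sum => t _; apply: ler_wpM2l => //.
      by apply: hIH; rewrite -ltnS (leq_trans (weight_part s j t E)).
    rewrite -Bnd_lin //; last by move=> t; exact: Value_nlip.
    apply: Bnd_mono => //.
      apply: nlip_addc; apply: nlip_convex => // t; exact: Value_nlip.
    move=> z; apply: (le_trans _ (br_le (upd s i Done) z j)).
    by rewrite /br hsj' /= le_max lexx orbT.
- have hg : nlip (Val (upd (upd s i Done) j Done)) := Value_nlip _.
  have hw' : (weight (upd s j Done) <= n)%N.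
    by rewrite -ltnS (leq_trans (weight_done s j _)) // E.
  apply: (@le_trans _ _ (- cF j + condE mu j t0
      (fun v => Bnd i (wB i (s i)) (cB i (s i)) (Val (upd (upd s i Done) j Done)) (Num.max y v)))).
    rewrite lerD2l; apply: E_le.
    * exact/nlip_good/(nlip_comp (Value_nlip _) (nlip_maxl y)).
    * exact/nlip_good/(nlip_comp (Bnd_nlip _ _ (cB i (s i)) w0 w1 _ hg) (nlip_maxl y)).
    * by move=> v; exact: hIH.
  rewrite Bnd_swap // -Bnd_addc //; last exact: nlip_E_shift.
  apply: Bnd_mono => //.
    by apply: nlip_addc; exact: nlip_E_shift.
  move=> z; apply: (le_trans _ (br_le (upd s i Done) z j)).
  by rewrite /br hsj' /=.
- exact: Bnd_ge.
Qed.

Lemma claimB s i y : s i <> Done ->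
  Val s y <= Bnd i (wB i (s i)) (cB i (s i)) (Val (upd s i Done)) y.
Proof. by move=> hi; exact: (claimB_n _ _ _ _ (leqnn _) hi). Qed.

Lemma Bnd_const i (w c : Gam i -> R) f z :
  (forall t, c t <= z) -> \sum_t w t = 1 -> Bnd i w c f z = f z.
Proof.
move=> hc w1; rewrite /Bnd.
transitivity (\sum_t w t * f z); last by rewrite -mulr_suml w1 mul1r.
apply: eq_bigr => t _; congr (_ * _).
transitivity (condE mu i t (fun _ => f z)); last exact: E_cst.
congr condE; apply/funext => u; congr f.
apply/max_idPl; rewrite ge_min (hc t) orbT //.
Qed.

Lemma stop_opt_n n : forall s z, (weight s <= n)%N ->
  (forall j, s j = Closed -> Mc j <= z) ->
  (forall j t, s j = Part t -> sFt j t <= z) -> Val s z = z.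
Proof.
elim: n => [|n IH] s z hw hC hP.
  have h0 : weight s = 0%N by apply/eqP; rewrite -leqn0.
  by rewrite /Value h0.
case: (pselect (exists j, s j <> Done)) => [[j hj]|nall]; last first.
  have h0 : weight s = 0%N.
    rewrite weightE big1 // => j _.
    case E: (s j) => //; exfalso; apply: nall; exists j; by rewrite E.
  by rewrite /Value h0.
apply/eqP; rewrite eq_le Value_ge andbT.
apply: (le_trans (claimB s j z hj)).
rewrite Bnd_const; last exact: wB_sum1.
- rewrite (IH (upd s j Done) z) //.
  + by rewrite -ltnS (leq_trans (weight_done s j hj)).
  + move=> k; have [<-|jk] := eqVneq j k; first by rewrite upd_same.
    by rewrite upd_other //; exact: hC.
  + move=> k t; have [ejk|jk] := eqVneq j k; first by subst k; rewrite upd_same.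
    by rewrite upd_other //; exact: hP.
- move: hj (hC j) (hP j); case: (s j) => [|t0|] //= _ h1 h2 t.
  + exact: h1.
  + exact: h2.
Qed.

Lemma main_in s y i :
  y < Val s y -> s i = Closed -> sP i < sF i ->
  (forall j, s j = Closed -> Num.max (sF j) (sP j) <= sF i) ->
  (forall j t, s j = Part t -> sFt j t <= sF i) ->
  Val s y = QFopen pT mu cF cP s y i.
Proof.
move=> hstop hi hFP hmaxC hmaxP.
have hf : nlip (Val (upd s i Done)) := Value_nlip _.
have hB := claimB s i y ltac:(by rewrite hi).
rewrite hi /= in hB.
have hM : Mc i = sF i by rewrite /Mc; apply/max_idPl; exact: ltW.
have fw : forall z, sF i <= z -> Val (upd s i Done) z = z.
  move=> z hz; apply: (stop_opt_n _ _ _ (leqnn (weight (upd s i Done)))) => //.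
  + move=> k; have [<-|ik] := eqVneq i k; first by rewrite upd_same.
    by rewrite upd_other // => /hmaxC h; exact: le_trans h hz.
  + move=> k t; have [eik|ik] := eqVneq i k; first by subst k; rewrite upd_same.
    by rewrite upd_other // => /hmaxP h; exact: le_trans h hz.
have ylt : y < sF i.
  rewrite ltNge; apply/negP => hy.
  move: hB; rewrite Bnd_const ?hpT1 //; last by move=> t; rewrite hM.
  rewrite fw // => hB; move: (lt_le_trans hstop hB); by rewrite ltxx.
have hQ : QFopen pT mu cF cP s y i = Bnd i (pT i) (fun _ => Mc i) (Val (upd s i Done)) y.
  rewrite /QFopen /Bnd hM -(hsF i).
  rewrite -sumrN -big_split /=; apply: eq_bigr => t _.
  rewrite -mulrN -mulrDr; congr (_ * _).
  rewrite addrC; apply/eqP; rewrite subr_eq; apply/eqP.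
  rewrite -E_add; [|exact: G_good|exact: good_pos].
  congr condE; apply/funext => v.
  have [hv|hv] := leP v (sF i).
    have -> : Num.max (v - sF i) 0 = 0 by apply/max_idPr; rewrite subr_le0.
    by rewrite addr0.
  have -> : Num.max y v = v by apply/max_idPr; exact: ltW (lt_trans ylt hv).
  have -> : Num.max y (sF i) = sF i by apply/max_idPr; exact: ltW.
  have -> : Num.max (v - sF i) 0 = v - sF i by apply/max_idPl; rewrite subr_ge0 ltW.
  rewrite !fw ?lexx //; last exact: ltW.
  by rewrite addrC subrK.
apply/eqP; rewrite eq_le; apply/andP; split; first by rewrite hQ.
apply: (le_trans _ (br_le s y i)).
by rewrite /br hi /= le_max lexx.
Qed.

End Main.

Theorem mainTheorem3 (R : realType) (N : nat) (Gam : 'I_N -> finType)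
  (pT : forall j, Gam j -> R) (mu : forall j, Gam j -> probability R R)
  (cF cP : 'I_N -> R)
  (hpT0 : forall j t, 0 <= pT j t)
  (hpT1 : forall j, \sum_(t : Gam j) pT j t = 1)
  (hmu0 : forall j t, mu j t [set v | v < 0] = 0%E)
  (hmuI : forall j t, (mu j t).-integrable setT (fun v => v%:E))
  (hcF : forall j, 0 < cF j) (hcP : forall j, 0 < cP j)
  (sF sP : 'I_N -> R) (sFt : forall j, Gam j -> R)
  (hsF : forall j, is_sigmaF pT mu cF j (sF j))
  (hsP : forall j, is_sigmaP pT mu cF cP j (sP j))
  (hsFt : forall j t, is_sigmaFt mu cF j t (sFt j t))
  (s : state N Gam) (y : R) (i : 'I_N)
  (hstop : y < Value pT mu cF cP s y)
  (hi : s i = Closed)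
  (hFP : sP i < sF i)
  (hmaxC : forall j, s j = Closed -> Num.max (sF j) (sP j) <= sF i)
  (hmaxP : forall j t, s j = Part t -> sFt j t <= sF i) :
  Value pT mu cF cP s y = QFopen pT mu cF cP s y i.
Proof. exact: (@main_in _ _ _ _ _ _ _ hpT0 hpT1 hmuI _ _ _ hsF hsP hsFt _ _ _ hstop hi hFP hmaxC hmaxP). Qed.
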